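(* Let $b,c>0$ and let $x_1,x_2,\dots\in\mathbb{R}^d$ satisfy $\|x_t\|^2\le X^2$ for all $t$. Define $D_1=bI+x_1x_1^\top$ and $D_t=\big(D_{t-1}^{-1}+c^{-1}I\big)^{-1}+x_tx_t^\top$ for $t\ge2$. Then for every $t\ge1$ all eigenvalues of $D_t$ satisfy \[ \max_i\lambda_i(D_t)\le\max\Big\{\frac{3X^2+\sqrt{X^4+4X^2c}}{2},\ b+X^2\Big\}. \] *)

(* Defs.v *)
From mathcomp Require Import all_boot all_order all_algebra.
Set Implicit Arguments. Unset Strict Implicit. Unset Printing Implicit Defensive.
Import Order.TTheory GRing.Theory Num.Theory.
Local Open Scope ring_scope.

(* The sequence D_t, t >= 1, of the paper; index 0 is an unused dummy (0).
   D_1 = b I + x_1 x_1^T,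
   D_t = (D_{t-1}^{-1} + c^{-1} I)^{-1} + x_t x_t^T  for t >= 2. *)
Fixpoint Dseq (R : fieldType) (d : nat) (b c : R) (x : nat -> 'cV[R]_d)
  (t : nat) : 'M[R]_d :=
  match t with
  | 0 => 0
  | 1 => b%:M + x 1%N *m (x 1%N)^T
  | (s.+1 as t').+1 =>
      invmx (invmx (Dseq b c x t') + c^-1%:M) + x t'.+1 *m (x t'.+1)^T
  end.

Definition sqnorm (R : ringType) (d : nat) (v : 'cV[R]_d) : R :=
  \sum_(i < d) v i 0 ^+ 2.

(* Main.v *)
Require Import Defs.
From mathcomp Require Import all_boot all_order all_algebra.
From mathcomp Require Import ring lra.
Import Order.TTheory GRing.Theory Num.Theory.
Set Implicit Arguments. Unset Strict Implicit.
Local Open Scope ring_scope.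

Section S.
Variables (R : rcfType) (n : nat).
Implicit Types (u v w : 'rV[R]_n) (A : 'M[R]_n).

Definition dot u w : R := (u *m w^T) 0 0.

Lemma dotE u w : dot u w = \sum_i u 0 i * w 0 i.
Proof. by rewrite /dot !mxE; apply: eq_bigr => i _; rewrite mxE. Qed.

Lemma dotC u w : dot u w = dot w u.
Proof. by rewrite !dotE; apply: eq_bigr => i _; rewrite mulrC. Qed.

Lemma dotDl u v w : dot (u + v) w = dot u w + dot v w.
Proof. by rewrite /dot mulmxDl mxE. Qed.

Lemma dotBl u v w : dot (u - v) w = dot u w - dot v w.
Proof. by rewrite /dot mulmxBl !mxE. Qed.

Lemma dotZl a u w : dot (a *: u) w = a * dot u w.
Proof. by rewrite /dot -scalemxAl mxE. Qed.

Lemma dotDr u v w : dot w (u + v) = dot w u + dot w v.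
Proof. by rewrite !(dotC w) dotDl. Qed.
Lemma dotBr u v w : dot w (u - v) = dot w u - dot w v.
Proof. by rewrite !(dotC w) dotBl. Qed.
Lemma dotZr a u w : dot w (a *: u) = a * dot w u.
Proof. by rewrite !(dotC w) dotZl. Qed.

Lemma dot_ge0 u : 0 <= dot u u.
Proof. by rewrite dotE sumr_ge0 // => i _; rewrite -expr2 sqr_ge0. Qed.

Lemma dot_gt0 u : u != 0 -> 0 < dot u u.
Proof.
move=> hu; rewrite lt_def dot_ge0 andbT; apply: contra hu => /eqP h.
apply/eqP/rowP => i; rewrite mxE.
have hp : forall j : 'I_n, predT j -> 0 <= u 0 j * u 0 j.
  by move=> j _; rewrite -expr2 sqr_ge0.
have := @psumr_eq0P _ _ predT (fun i => u 0 i * u 0 i) hp.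
rewrite -dotE => /(_ h i isT) /eqP; rewrite mulf_eq0 orbb => /eqP ->.
by [] || by rewrite mxE.
Qed.

Lemma dot_sym A u w : A^T = A -> dot (u *m A) w = dot u (w *m A).
Proof. by move=> hA; rewrite /dot trmx_mul hA mulmxA. Qed.

Lemma CS u w : dot u w ^+ 2 <= dot u u * dot w w.
Proof.
have [w0|] := eqVneq w 0.
  by rewrite w0 /dot trmx0 !mulmx0 mxE expr0n /= mulr0.
move=> /dot_gt0 ha.
set a := dot w w in ha *; set p := dot u w.
have := dot_ge0 (a *: u - p *: w).
rewrite !(dotBl, dotBr, dotZl, dotZr) (dotC w u) -/p -/a => h.
have : 0 <= a * (a * dot u u - p ^+ 2) by nra.
by rewrite pmulr_rge0 // subr_ge0 mulrC.
Qed.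

Definition q A v := dot (v *m A) v.

Lemma qDsc A a v : q (A + a%:M) v = q A v + a * dot v v.
Proof. by rewrite /q mulmxDr mul_mx_scalar dotDl dotZl. Qed.

Lemma qZ A a v : q A (a *: v) = a ^+ 2 * q A v.
Proof. by rewrite /q -scalemxAl dotZl dotZr mulrA expr2. Qed.

Lemma dot0l w : dot 0 w = 0.
Proof. by rewrite /dot mul0mx mxE. Qed.

Lemma posdef_unit A m : 0 < m -> (forall v, m * dot v v <= q A v) -> A \in unitmx.
Proof.
move=> hm hlo; rewrite unitmxE unitfE; apply/det0P => -[v hv0 hv].
have := hlo v; rewrite /q hv dot0l => h.
have h2 := dot_gt0 hv0; nra.
Qed.

Lemma inv_up A m v : 0 < m -> A^T = A -> (forall v, m * dot v v <= q A v) ->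
  q (invmx A) v <= m^-1 * dot v v.
Proof.
move=> hm hA hlo; have hU := posdef_unit hm hlo.
set w := v *m invmx A.
have hw : w *m A = v by rewrite /w -mulmxA mulVmx // mulmx1.
have h1 := hlo w; rewrite /q hw in h1.
have h2 := dot_ge0 (v - m *: w).
rewrite !(dotBl, dotBr, dotZl, dotZr) (dotC w v) in h2.
rewrite /q -/w ler_pdivlMl //.
set a := dot v w in h1 h2 *; rewrite (dotC w v) -/a; nra.
Qed.

Lemma inv_lo A m N v : 0 < m -> 0 < N -> A^T = A -> (forall v, m * dot v v <= q A v) ->
  (forall v, q A v <= N * dot v v) -> N^-1 * dot v v <= q (invmx A) v.
Proof.
move=> hm hN hA hlo hup; have hU := posdef_unit hm hlo.
set w := v *m invmx A.
have hw : w *m A = v by rewrite /w -mulmxA mulVmx // mulmx1.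
have h1 : 0 <= q A (w - N^-1 *: v).
  by apply: le_trans (hlo _); apply: mulr_ge0; [exact: ltW | exact: dot_ge0].
rewrite /q mulmxBl -scalemxAl hw !(dotBl, dotBr, dotZl, dotZr) in h1.
rewrite (dot_sym _ _ hA) hw -/(q A v) in h1.
have h3 := hup v.
rewrite /q -/w (dotC w v).
try rewrite (dotC w v) in h1.
set a := dot v w in h1 *; set vv := dot v v in h1 h3 *.
have hs : 0 < N^-1 by rewrite invr_gt0.
have h4 : N^-1 * q A v <= vv.
  by rewrite ler_pdivrMl // .
have h5 : N^-1 * (N^-1 * q A v) <= N^-1 * vv by rewrite ler_pM2l.
lra.
Qed.

Lemma q_rank1 (x : 'cV[R]_n) v : q (x *m x^T) v = dot v x^T ^+ 2.
Proof.
rewrite /q /dot trmxK mulmxA [v *m x]mx11_scalar mul_scalar_mx -scalemxAl mxE expr2.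
by rewrite -trmx_mul !mxE eqxx !mulr1n.
Qed.

Lemma qD A B v : q (A + B) v = q A v + q B v.
Proof. by rewrite /q mulmxDr dotDl. Qed.
Lemma qB A B v : q (A - B) v = q A v - q B v.
Proof. by rewrite /q mulmxBr dotBl. Qed.
Lemma qZm a A v : q (a *: A) v = a * q A v.
Proof. by rewrite /q -scalemxAr dotZl. Qed.
Lemma qsc a v : q a%:M v = a * dot v v.
Proof. by rewrite /q mul_mx_scalar dotZl. Qed.

Lemma step D (x : 'cV[R]_n) c B dl X2 : 0 < c -> 0 < B -> 0 < dl -> D^T = D ->
  (forall v, dl * dot v v <= q D v) -> (forall v, q D v <= B * dot v v) ->
  dot x^T x^T <= X2 -> X2 * (B + c) <= B ^+ 2 ->
  let D' := invmx (invmx D + c^-1%:M) + x *m x^T in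
  [/\ D'^T = D', (forall v, (c * dl / (dl + c)) * dot v v <= q D' v)
     & (forall v, q D' v <= B * dot v v)].
Proof.
move=> hc hB hdl hDs hlo hup hx hX D'.
have hDU := posdef_unit hdl hlo.
set F := D + c%:M.
have hFs : F^T = F.
  by rewrite /F raddfD /= hDs tr_scalar_mx.
have hFlo : forall v, (dl + c) * dot v v <= q F v.
  by move=> v; rewrite /F qDsc mulrDl lerD2r.
have hFup : forall v, q F v <= (B + c) * dot v v.
  by move=> v; rewrite /F qDsc mulrDl lerD2r.
have hdc : 0 < dl + c by rewrite addr_gt0.
have hBc : 0 < B + c by rewrite addr_gt0.
have hFU := posdef_unit hdc hFlo.
set iF := invmx F; set iD := invmx D.
have key : c *: (iF *m iD) = iD - iF.
  have <- : iF *m (F - D) *m iD = iD - iF.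
    by rewrite mulmxBr mulmxBl mulVmx // mul1mx -mulmxA mulmxV // mulmx1.
  by rewrite /F (addrC D) addrK mul_mx_scalar scalemxAl.
set E := c%:M - c ^+ 2 *: iF.
have hE : E *m (iD + c^-1%:M) = 1%:M.
  rewrite /E mulmxBl mulmxDr mulmxDr mul_scalar_mx -scalemxAl mul_mx_scalar.
  have e1 : c^-1 *: c%:M = 1%:M :> 'M[R]_n.
    by rewrite -[c%:M]scalemx1 scalerA mulVf ?gt_eqF // scale1r.
  have e2 : c^+2 *: (iF *m iD) = c *: (iD - iF) by rewrite expr2 -scalerA key.
  have e3 : c^+2 *: iF *m (c^-1)%:M = c *: iF.
    by rewrite mul_mx_scalar scalerA expr2 mulrA mulVf ?gt_eqF // mul1r.
  by rewrite e1 e2 e3 scalerBr subrK addrAC subrr add0r.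
have [_ hGU] := mulmx1_unit hE.
have hEi : invmx (iD + c^-1%:M) = E.
  by rewrite -[LHS]mul1mx -hE -mulmxA mulmxV //; exact: mulmx1.
rewrite /D' hEi; split.
- rewrite raddfD /= trmx_mul trmxK /E raddfB /= tr_scalar_mx linearZ /= trmx_inv hFs.
  done.
- move=> v; rewrite qD q_rank1 qB qsc qZm.
  have h1 := inv_up v hdc hFs hFlo.
  have h2 := sqr_ge0 (dot v x^T).
  have hv := dot_ge0 v.
  set Q := q iF v in h1 *; set vv := dot v v in h1 hv *.
  have -> : c * dl / (dl + c) = c - c ^+ 2 * (dl + c)^-1.
    by field; rewrite gt_eqF.
  have : c ^+ 2 * Q <= c ^+ 2 * ((dl + c)^-1 * vv) by rewrite ler_pM2l ?exprn_gt0.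
  nra.
- move=> v; rewrite qD q_rank1 qB qsc qZm.
  have h1 := inv_lo v hdc hBc hFs hFlo hFup.
  have h2 := CS v x^T.
  have hv := dot_ge0 v.
  set Q := q iF v in h1 *; set vv := dot v v in h1 h2 hv *.
  have h3 : c ^+ 2 * ((B + c)^-1 * vv) <= c ^+ 2 * Q by rewrite ler_pM2l ?exprn_gt0.
  have h4 : dot v x^T ^+ 2 <= vv * X2 by apply: le_trans h2 _; rewrite ler_wpM2l.
  have h5 : c - c ^+ 2 * (B + c)^-1 + X2 <= B.
    have -> : c - c ^+ 2 * (B + c)^-1 = c * B / (B + c) by field; rewrite gt_eqF.
    rewrite -lerBrDr ler_pdivrMr // ; nra.
  nra.
Qed.
End S.

Lemma sqnorm_dot (R : rcfType) n (x : 'cV[R]_n) : sqnorm x = dot x^T x^T.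
Proof. by rewrite /sqnorm dotE; apply: eq_bigr => i _; rewrite !mxE expr2. Qed.

Theorem lemma7 (R : rcfType) (d : nat) (b c X : R) (x : nat -> 'cV[R]_d)
  (hb : 0 < b) (hc : 0 < c)
  (hx : forall t : nat, (1 <= t)%N -> sqnorm (x t) <= X ^+ 2) :
  forall (t : nat) (lam : R), (1 <= t)%N ->
    eigenvalue (Dseq b c x t) lam ->
    lam <= Num.max ((3%:R * X ^+ 2 + Num.sqrt (X ^+ 4 + 4%:R * X ^+ 2 * c)) / 2%:R)
                   (b + X ^+ 2).
Proof.
set S := Num.sqrt _; set B := Num.max _ _.
have hY : 0 <= X ^+ 2 by apply: sqr_ge0.
have hS0 : 0 <= S by apply: sqrtr_ge0.
have hX4 : X ^+ 4 = X ^+ 2 * X ^+ 2 by rewrite -exprD.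
have hS2 : S ^+ 2 = X ^+ 2 * X ^+ 2 + 4%:R * X ^+ 2 * c.
  rewrite sqr_sqrtr hX4 //.
  by have := ltW hc; nra.
have hB1 : (3%:R * X ^+ 2 + S) / 2%:R <= B by rewrite le_max lexx.
have hB2 : b + X ^+ 2 <= B by rewrite le_max lexx orbT.
have hB : 0 < B by apply: lt_le_trans hB2; rewrite ltr_wpDr.
clearbody B S.
have hX : X ^+ 2 * (B + c) <= B ^+ 2.
  set Y := X ^+ 2 in hY hS2 hB1 *. clearbody Y.
  have h1 : Y + S <= 2%:R * B by lra.
  have h2 : Y - S <= 2%:R * B by lra.
  have : 0 <= (2%:R * B - (Y + S)) * (2%:R * B - (Y - S)) by rewrite mulr_ge0 // subr_ge0.
  nra.
have inv : forall s, let D := Dseq b c x s.+1 in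
  D^T = D /\ exists dl, [/\ 0 < dl, (forall v, dl * dot v v <= q D v)
                         & (forall v, q D v <= B * dot v v)].
  elim => [|s IH] /=.
    have hx1 := hx 1%N isT; rewrite sqnorm_dot in hx1.
    split.
      by rewrite raddfD /= trmx_mul trmxK tr_scalar_mx.
    exists b; split => // v; rewrite qD q_rank1 qsc.
      by rewrite lerDl sqr_ge0.
    have h2 := CS v (x 1%N)^T; have hv := dot_ge0 v.
    have h4 : dot v (x 1%N)^T ^+ 2 <= dot v v * X ^+ 2.
      by apply: le_trans h2 _; rewrite ler_wpM2l.
    have : b * dot v v + dot v v * X ^+ 2 <= B * dot v v.
      by rewrite mulrC -mulrDr mulrC ler_wpM2r.
    lra.
  move: IH => [hs [dl [hdl hlo hup]]].
  have hxs := hx s.+2 isT; rewrite sqnorm_dot in hxs.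
  have [h1 h2 h3] := @step R d (Dseq b c x s.+1) (x s.+2) c B dl (X ^+ 2) hc hB hdl hs hlo hup hxs hX.
  split => //; exists (c * dl / (dl + c)); split => //.
  by rewrite divr_gt0 ?mulr_gt0 ?addr_gt0.
move=> [//|s] lam _ /eigenvalueP [v hv hv0].
have [_ [dl [_ _ hup]]] := inv s.
have := hup v; rewrite /q hv dotZl => h.
have hvv := dot_gt0 hv0.
by rewrite -(ler_pM2r hvv).
Qed.
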